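(* Let $p=p(n)\in[0,1]$ satisfy $p\ge \frac{51\log n}{n}$ and let $G\sim G(n,p)$. Then $$\lim_{n\to\infty}\Pr\big(\sigma(G)<\delta(G)\big)=1.$$
   Context: $G(n,p)$ is the Erdős–Rényi random graph on $n$ vertices in which each of the $\binom n2$ possible edges is present independently with probability $p$. For a graph $G$, the spanning tree packing number $\sigma(G)$ is the maximum number of pairwise edge-disjoint spanning trees contained in $G$, and $\delta(G)$ is the minimum degree of $G$. $\log$ denotes the natural logarithm. *)

(* Defs.v *)
From Stdlib Require Import Reals.
From mathcomp Require Import all_boot.
Set Implicit Arguments. Unset Strict Implicit. Unset Printing Implicit Defensive.

Definition all_pairs (n : nat) : {set {set 'I_n}} :=
  [set e : {set 'I_n} | #|e| == 2].

Definition is_graph n (G : {set {set 'I_n}}) : bool := G \subset all_pairs n.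

Definition adj n (G : {set {set 'I_n}}) : rel 'I_n :=
  fun x y => [set x; y] \in G.

Definition connected_spanning n (G : {set {set 'I_n}}) : bool :=
  [forall x, forall y, connect (adj G) x y].

(* A spanning tree of K_n: a set of n-1 edges forming a connected spanning
   subgraph (equivalently, connected and acyclic). *)
Definition spanning_tree n (T : {set {set 'I_n}}) : bool :=
  [&& is_graph T, connected_spanning T & #|T| == n.-1].

Definition packable n (G : {set {set 'I_n}}) (k : nat) : bool :=
  [exists f : {ffun 'I_k -> {set {set 'I_n}}},
     [forall i, spanning_tree (f i) && (f i \subset G)] &&
     [forall i, forall j, (i != j) ==> [disjoint f i & f j]]].

(* spanning tree packing number (for n >= 2 every tree has >= 1 edge, so
   at most #|G| disjoint trees fit and the bound below is no restriction) *)
Definition tree_packing_number n (G : {set {set 'I_n}}) : nat :=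
  \max_(k < #|G|.+1 | packable G k) k.

Definition degree n (G : {set {set 'I_n}}) (v : 'I_n) : nat :=
  #|[set e in G | v \in e]|.

(* minimum degree (degrees are < n, so the neutral element n is harmless) *)
Definition min_degree n (G : {set {set 'I_n}}) : nat :=
  \big[minn/n]_(v : 'I_n) degree G v.

Definition Rsum_seq (T : Type) (s : seq T) (f : T -> R) : R :=
  foldr (fun x acc => Rplus (f x) acc) R0 s.

Definition Gnp_prob (n : nat) (p : R) (P : {set {set 'I_n}} -> bool) : R :=
  Rsum_seq (enum (powerset (all_pairs n)))
    (fun G => if P G then
                Rmult (pow p #|G|) (pow (Rminus R1 p) (#|all_pairs n| - #|G|))
              else R0).

(* Main.v *)
Require Import Defs.
From Stdlib Require Import Reals.
From mathcomp Require Import all_boot.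
From Stdlib Require Import Lra Lia.
From mathcomp Require Import all_order all_algebra Rstruct.
Set Implicit Arguments. Unset Strict Implicit. Unset Printing Implicit Defensive.
Import Order.TTheory GRing.Theory Num.Theory.

Local Open Scope R_scope.

Lemma exp_pow_INR (x : R) (k : nat) : exp x ^ k = exp (INR k * x).
Proof.
induction k as [|k IH].
- simpl; rewrite Rmult_0_l exp_0; reflexivity.
- replace (exp x ^ S k) with (exp x * exp x ^ k) by reflexivity.
  rewrite IH -exp_plus S_INR; f_equal; ring.
Qed.

Lemma exp_le' (x y : R) : x <= y -> exp x <= exp y.
Proof.
intro H; destruct (Rle_lt_or_eq_dec _ _ H) as [H1|H1].
- left; apply exp_increasing; exact H1.
- rewrite H1; lra.
Qed.

Lemma pow_le_exp (q c : R) (k : nat) : 0 <= q -> q <= exp c -> q ^ k <= exp (INR k * c).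
Proof. intros H0 H1; rewrite -exp_pow_INR; apply pow_incr; lra. Qed.

Lemma exp_m25 : exp (-(2/5)) <= 5/7.
Proof.
rewrite exp_Ropp. pose proof (exp_ineq1_le (2/5)).
replace (5/7) with (/ (7/5)) by field.
apply Rinv_le_contravar; lra.
Qed.

Lemma exp_125 : exp (1/25) <= 25/24.
Proof.
replace (1/25) with (- (-(1/25))) by ring. rewrite exp_Ropp.
pose proof (exp_ineq1_le (-(1/25))).
replace (25/24) with (/ (24/25)) by field.
apply Rinv_le_contravar; lra.
Qed.

Lemma exp_ln2 (x : R) : 0 < x -> exp (-(2 * ln x)) = / (x * x).
Proof.
intro H. rewrite exp_Ropp. f_equal.
replace (2 * ln x) with (ln x + ln x) by ring. rewrite exp_plus exp_ln; auto.
Qed.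

Lemma exp_ln1 (x : R) : 0 < x -> exp (- ln x) = / x.
Proof. intro H. rewrite exp_Ropp exp_ln; auto. Qed.

Lemma ln_ge0' (x : R) : 1 <= x -> 0 <= ln x.
Proof.
intro H. destruct (Rle_or_lt 0 (ln x)) as [H1|H1]; auto.
apply exp_increasing in H1. rewrite exp_0 exp_ln in H1; lra.
Qed.

Lemma T1_bound (x p : R) (k : nat) : 3 <= x -> INR k = x - 1 -> 0 <= p <= 1 ->
  51 * ln x / x <= p ->
  x * (exp (2/5 * (11/20 * INR k * p)) * (p * exp (-(2/5)) + (1 - p)) ^ k) <= / x.
Proof.
intros Hx Hk Hp Hpl.
pose proof exp_m25 as He. pose proof (exp_pos (-(2/5))) as He0.
assert (Hq : (p * exp (-(2/5)) + (1 - p)) ^ k <= exp (INR k * (-(2/7) * p))).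
{ apply pow_le_exp. nra.
  eapply Rle_trans; [| apply exp_ineq1_le]. nra. }
assert (HL : 0 <= ln x).
{ apply ln_ge0'; lra. }
assert (Hpx : 51 * ln x <= p * x).
{ unfold Rdiv in Hpl. apply (Rmult_le_compat_r x) in Hpl; [|lra].
  rewrite Rmult_assoc Rinv_l in Hpl; lra. }
assert (Hex : exp (2/5 * (11/20 * INR k * p)) * exp (INR k * (-(2/7) * p))
              <= exp (-(2 * ln x))).
{ rewrite -exp_plus. apply exp_le'. rewrite Hk.
  assert (H1 : 23/350 * (x - 1) * (p * x) >= 23/350 * (x-1) * (51 * ln x)) by nra.
  assert (H2 : 23/350 * (x - 1) * p * x >= 2 * ln x * x) by nra.
  nra. }
rewrite exp_ln2 in Hex; last lra.
pose proof (exp_pos (2/5 * (11/20 * INR k * p))).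
assert (Hprod : exp (2/5 * (11/20 * INR k * p)) * (p * exp (-(2/5)) + (1 - p)) ^ k
   <= / (x * x)).
{ eapply Rle_trans; [| exact Hex]. apply Rmult_le_compat_l; lra. }
replace (/ x) with (x * / (x * x)) by (field; lra).
apply Rmult_le_compat_l; lra.
Qed.

Lemma T2_bound (x p : R) (k : nat) : 120 <= x -> 2 * INR k = x * (x - 1) -> 0 <= p <= 1 ->
  51 * ln x / x <= p ->
  exp (-(1/25 * (21/20 * INR k * p))) * (p * exp (1/25) + (1 - p)) ^ k <= / x.
Proof.
intros Hx Hk Hp Hpl.
pose proof exp_125 as He. pose proof (exp_pos (1/25)) as He0.
assert (Hq : (p * exp (1/25) + (1 - p)) ^ k <= exp (INR k * (p / 24))).
{ apply pow_le_exp. nra.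
  eapply Rle_trans; [| apply exp_ineq1_le]. nra. }
assert (HL : 0 <= ln x) by (apply ln_ge0'; lra).
assert (Hpx : 51 * ln x <= p * x).
{ unfold Rdiv in Hpl. apply (Rmult_le_compat_r x) in Hpl; [|lra].
  rewrite Rmult_assoc Rinv_l in Hpl; lra. }
assert (Hex : exp (-(1/25 * (21/20 * INR k * p))) * exp (INR k * (p / 24))
              <= exp (- ln x)).
{ rewrite -exp_plus. apply exp_le'.
  assert (H1 : (x - 1) * (p * x) >= (x-1) * (51 * ln x)) by nra.
  nra. }
rewrite exp_ln1 in Hex; last lra.
pose proof (exp_pos (-(1/25 * (21/20 * INR k * p)))).
eapply Rle_trans; [| exact Hex]. apply Rmult_le_compat_l; lra.
Qed.

Lemma final_step (P T1 T2 x eps : R) : P <= 1 -> 1 - T1 - T2 <= P -> T1 <= / x -> T2 <= / x ->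
  0 < eps -> 2 / eps < x -> R_dist P 1 < eps.
Proof.
intros H1 H2 H3 H4 He Hx.
assert (Hx0 : 0 < x).
{ apply Rlt_trans with (2/eps); auto. unfold Rdiv. apply Rmult_lt_0_compat; [lra|]. apply Rinv_0_lt_compat; lra. }
assert (Hi : 2 / x < eps).
{ apply (Rmult_lt_compat_r eps) in Hx; auto. unfold Rdiv in *.
  rewrite Rmult_assoc Rinv_l in Hx; last lra.
  apply (Rmult_lt_reg_r x); auto. rewrite Rmult_assoc Rinv_l; last lra. lra. }
unfold R_dist. rewrite Rabs_left1; last lra.
unfold Rdiv in Hi. lra.
Qed.

Lemma cond_arith (x p C : R) (k : nat) : 22 <= x -> INR k = x - 1 -> 2 * C = x * (x - 1) ->
  0 <= p <= 1 ->
  11/20 * INR k * p < x /\ 21/20 * C * p <= INR k * (11/20 * INR k * p).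
Proof.
intros Hx Hk HC Hp. rewrite Hk. split.
- nra.
- assert (H : 0 <= (x - 1) * p * (x / 40 - 11/20)).
  { apply Rmult_le_pos; [nra | lra]. }
  nra.
Qed.

Lemma INR_pred' (n : nat) : (0 < n)%nat -> INR (Nat.pred n) = INR n - 1.
Proof. case: n => [|n] H //. rewrite S_INR. simpl. ring. Qed.

Lemma arch_eps (eps : R) : 0 < eps -> exists K : nat, 2 / eps < INR K.
Proof. intros _. destruct (INR_unbounded (2 / eps)) as [K HK]. exists K; lra. Qed.

Lemma INR51 (x p : R) : INR 51 * ln x / x <= p -> 51 * ln x / x <= p.
Proof. intro H. rewrite INR_IZR_INZ in H. exact H. Qed.

Lemma INR_geq (m n : nat) : (m <= n)%N -> INR m <= INR n.
Proof. move/ssrnat.leP. apply le_INR. Qed.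

Local Close Scope R_scope.

Lemma card_all_pairs n : #|all_pairs n| = 'C(n, 2).
Proof. by rewrite /all_pairs card_draws card_ord. Qed.

Lemma card_star n (v : 'I_n) : #|[set e in all_pairs n | v \in e]| = n.-1.
Proof.
have -> : [set e in all_pairs n | v \in e] = (fun w => [set v; w]) @: [set~ v].
  apply/setP => e; rewrite !inE; apply/andP/imsetP.
    move=> [/cards2P [x [y [Hxy ->]]]].
    rewrite !inE => /orP[/eqP->|/eqP->].
      by exists y => //; rewrite !inE eq_sym.
    by exists x; [rewrite !inE | rewrite setUC].
  move=> [w]; rewrite !inE => Hw ->; split; last by rewrite !inE eqxx.
  have Hvw : (v == w) = false by apply/eqP => E; rewrite E eqxx in Hw.
  by rewrite cards2 Hvw.
rewrite card_in_imset ?cardsC1 ?card_ord // => w1 w2; rewrite !inE => H1 H2 E.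
have : w1 \in [set v; w2] by rewrite -E !inE eqxx orbT.
by rewrite !inE (negbTE H1) => /eqP.
Qed.

Lemma packable_bound n (G : {set {set 'I_n}}) k :
  packable G k -> k * n.-1 <= #|G|.
Proof.
case/existsP=> f /andP[/forallP Hf /forallP Hd].
have Hs i : #|f i| = n.-1 by case/andP: (Hf i) => /and3P[_ _ /eqP].
have HG i : f i \subset G by case/andP: (Hf i).
have -> : k * n.-1 = \sum_(i < k) #|f i|.
  by rewrite (eq_bigr (fun _ => n.-1)) // sum_nat_const card_ord.
have E i : #|f i| = \sum_(e in G) (e \in f i).
  rewrite -(setIidPr (HG i)) -sum1_card [LHS]big_mkcond [RHS]big_mkcond /=.
  by apply: eq_bigr => e _; rewrite inE; case: (e \in G); case: (e \in f i).
rewrite (eq_bigr _ (fun i _ => E i)) exchange_big /= -sum1_card.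
apply: leq_sum => e _.
case: (boolP [exists i, e \in f i]) => [/existsP[i0 Hi0]|/existsPn Hn]; last first.
  by rewrite big1 // => i _; rewrite (negbTE (Hn i)).
rewrite (bigD1 i0) //= Hi0 big1 // => j Hj.
have := Hd i0; move/forallP/(_ j); rewrite eq_sym Hj /= => /disjointFr.
by move/(_ _ Hi0) => ->.
Qed.

Lemma tpn_bound n (G : {set {set 'I_n}}) : tree_packing_number G * n.-1 <= #|G|.
Proof.
rewrite /tree_packing_number.
apply: (big_ind (fun k => k * n.-1 <= #|G|)) => //.
  by move=> x y Hx Hy; rewrite /maxn; case: ifP.
by move=> i /packable_bound.
Qed.

Lemma mindeg_ind n (G : {set {set 'I_n}}) (P : nat -> Prop) :
  P n -> (forall v, P (degree G v)) -> P (min_degree G).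
Proof.
move=> Hn Hv; rewrite /min_degree.
apply: (big_ind P) => // x y Hx Hy; rewrite /minn; by case: ifP.
Qed.

Local Open Scope ring_scope.

Lemma prod_powerset (R : comNzRingType) (T : finType) (A : {set T}) (x y : T -> R) :
  \sum_(G in powerset A) \prod_(e in A) (if e \in G then x e else y e)
  = \prod_(e in A) (x e + y e).
Proof.
pose F (i : T) (b : bool) : R :=
  if i \in A then (if b then x i else y i) else (if b then 0 else 1).
have L : \prod_(e in A) (x e + y e) = \prod_(i : T) \sum_(b : bool) F i b.
  rewrite [LHS]big_mkcond /=; apply: eq_bigr => i _.
  by rewrite big_bool /F; case: (i \in A) => //=; rewrite add0r.
rewrite L bigA_distr_bigA /=.
rewrite (reindex (fun G : {set T} => [ffun i => i \in G])) /=; last first.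
  exists (fun f : {ffun T -> bool} => [set i | f i]) => [G _|f _].
    by apply/setP => i; rewrite inE ffunE.
  by apply/ffunP => i; rewrite ffunE inE.
rewrite [LHS]big_mkcond /=; apply: eq_bigr => G _.
rewrite powersetE; case: (boolP (G \subset A)) => HGA.
  rewrite [LHS]big_mkcond /=; apply: eq_bigr => i _; rewrite ffunE /F.
  case: (boolP (i \in A)) => // HiA.
  by have -> : i \in G = false by apply/negP => /(subsetP HGA); rewrite (negbTE HiA).
have [i /andP[HiG HiA]] : exists i, (i \in G) && (i \notin A).
  by move/subsetPn: HGA => [i Hi Hn]; exists i; rewrite Hi Hn.
by rewrite (bigD1 i) //= ffunE /F (negbTE HiA) HiG mul0r.
Qed.

Lemma weight_prod (R : comNzRingType) (T : finType) (A G : {set T}) (p : R) (g : T -> R) :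
  G \subset A ->
  p ^+ #|G| * (1 - p) ^+ (#|A| - #|G|) * \prod_(e in G) g e
  = \prod_(e in A) (if e \in G then p * g e else 1 - p).
Proof.
move=> HGA.
rewrite [RHS](eq_bigr (fun e => (if e \in G then p else 1 - p) * (if e \in G then g e else 1)));
  last by move=> e _; case: (e \in G); rewrite ?mulr1.
rewrite big_split /=; congr (_ * _); last first.
  rewrite -big_mkcondr /=; apply: eq_bigl => e.
  by case: (boolP (e \in G)) => H; rewrite ?andbT ?andbF ?(subsetP HGA).
rewrite (bigID (mem G)) /=; congr (_ * _).
  rewrite (eq_bigr (fun _ => p)); last by move=> e /andP[_ ->].
  rewrite (eq_bigl (mem (A :&: G))); last by move=> e; rewrite /= inE.
  by rewrite prodr_const (setIidPr HGA).
rewrite (eq_bigr (fun _ => 1 - p)); last by move=> e /andP[_ /negbTE ->].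
rewrite (eq_bigl (mem (A :\: G))); last by move=> e; rewrite /= inE andbC.
by rewrite prodr_const cardsD (setIidPr HGA).
Qed.

Lemma mgf (R : comNzRingType) (T : finType) (A : {set T}) (p : R) (g : T -> R) :
  \sum_(G in powerset A) (p ^+ #|G| * (1 - p) ^+ (#|A| - #|G|) * \prod_(e in G) g e)
  = \prod_(e in A) (p * g e + (1 - p)).
Proof.
rewrite -prod_powerset; apply: eq_bigr => G; rewrite powersetE => HGA.
exact: weight_prod.
Qed.


Definition wt n (p : R) (G : {set {set 'I_n}}) : R :=
  p ^+ #|G| * (1 - p) ^+ (#|all_pairs n| - #|G|).

Lemma Rsum_seqE (T : Type) (s : seq T) (f : T -> R) :
  Rsum_seq s f = \sum_(x <- s) f x.
Proof. by elim: s => [|x s IH] /=; rewrite ?big_nil ?big_cons // IH. Qed.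

Lemma Gnp_probE n p (P : {set {set 'I_n}} -> bool) :
  Gnp_prob p P = \sum_(G in powerset (all_pairs n)) (if P G then wt p G else 0).
Proof.
rewrite /Gnp_prob Rsum_seqE big_enum /=; apply: eq_bigr => G _.
by rewrite /wt !RpowE.
Qed.

Lemma wt_ge0 (n : nat) (p : R) (G : {set {set 'I_n}}) : 0 <= p -> p <= 1 -> 0 <= wt p G.
Proof. by move=> H0 H1; rewrite /wt mulr_ge0 // exprn_ge0 // subr_ge0. Qed.

Lemma sum_wt n (p : R) : \sum_(G in powerset (all_pairs n)) wt p G = 1.
Proof.
have E : \prod_(e in all_pairs n) (p * 1 + (1 - p)) = 1.
  by rewrite big1 // => e _; rewrite mulr1 addrC subrK.
rewrite -E -mgf; apply: eq_bigr => G _.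
by rewrite big1 ?mulr1.
Qed.

Lemma mgf_deg n (p u : R) (v : 'I_n) :
  \sum_(G in powerset (all_pairs n)) wt p G * u ^+ degree G v
  = (p * u + (1 - p)) ^+ n.-1.
Proof.
rewrite -(card_star v) -prodr_const.
have -> : \prod_(e in [set e in all_pairs n | v \in e]) (p * u + (1 - p))
  = \prod_(e in all_pairs n) (p * (if v \in e then u else 1) + (1 - p)).
  rewrite [RHS]big_mkcond [LHS]big_mkcond; apply: eq_bigr => e _.
  rewrite inE; case: (e \in all_pairs n); case: (v \in e) => //=.
  by rewrite mulr1 addrC subrK.
rewrite -mgf; apply: eq_bigr => G _; rewrite /wt; congr (_ * _).
rewrite -big_mkcondr -prodr_const /=; apply: eq_bigl => e.
by rewrite inE.
Qed.

Lemma mgf_edges n (p u : R) :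
  \sum_(G in powerset (all_pairs n)) wt p G * u ^+ #|G|
  = (p * u + (1 - p)) ^+ #|all_pairs n|.
Proof.
rewrite -prodr_const -mgf; apply: eq_bigr => G _; rewrite /wt.
by rewrite prodr_const.
Qed.

Lemma det_event n (G : {set {set 'I_n}}) (a b : R) :
  (1 < n)%N -> (forall v, a < (degree G v)%:R) -> a < n%:R ->
  #|G|%:R < b -> b <= n.-1%:R * a ->
  (tree_packing_number G < min_degree G)%N.
Proof.
move=> Hn Hv Han HGb Hb.
have Hd : a < (min_degree G)%:R by apply: (mindeg_ind (P := fun k => a < k%:R)).
have Ht := tpn_bound G.
have Hn1 : (0 < n.-1)%N by rewrite -ltnS prednK // ltnW.
have : (tree_packing_number G * n.-1)%:R < (min_degree G * n.-1)%:R :> R.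
  apply: (le_lt_trans (y := #|G|%:R)); first by rewrite ler_nat.
  apply: (lt_le_trans HGb); apply: (le_trans Hb).
  rewrite natrM mulrC; apply: ltW; rewrite ltr_pM2r // ltr0n //.
by rewrite ltr_nat ltn_pmul2r.
Qed.

Lemma exp_ge0' (x : R) : 0 <= exp x.
Proof. by apply/RleP; apply: Rlt_le; apply: exp_pos. Qed.

Lemma exp_ge1 (x : R) : 0 <= x -> 1 <= exp x.
Proof.
move=> H; have /RleP := exp_ineq1_le x; rewrite RplusE => H2.
have H3 : 1 + x <= exp x by exact: H2.
by apply: le_trans H3; rewrite lerDl.
Qed.

Lemma exp_mul_pow (c s : R) k : exp c * exp s ^+ k = exp (c + k%:R * s).
Proof. by rewrite expRX expRD RplusE RmultE mulr_natl. Qed.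

Lemma ind_bound n (G : {set {set 'I_n}}) (p a b s1 s2 : R) :
  (1 < n)%N -> 0 <= s1 -> 0 <= s2 -> a < n%:R -> b <= n.-1%:R * a ->
  1 - \sum_(v : 'I_n) exp (s1 * a) * exp (- s1) ^+ degree G v
    - exp (-(s2 * b)) * exp s2 ^+ #|G|
  <= (if (tree_packing_number G < min_degree G)%N then 1 else 0).
Proof.
move=> Hn Hs1 Hs2 Han Hb.
set S := \sum_(v : 'I_n) _.
set T := exp _ * _.
have S0 : 0 <= S by apply: sumr_ge0 => v _; rewrite mulr_ge0 ?exprn_ge0 ?exp_ge0'.
have T0 : 0 <= T by rewrite mulr_ge0 ?exprn_ge0 ?exp_ge0'.
case: ifP => HP.
  by rewrite -addrA -opprD lerBlDr lerDl addr_ge0.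
case: (boolP [forall v, a < (degree G v)%:R]) => Hall.
  case: (boolP (#|G|%:R < b)) => HGb.
    by rewrite (det_event Hn (fun v => forallP Hall v) Han HGb Hb) in HP.
  have : 1 <= T.
    rewrite /T exp_mul_pow; apply: exp_ge1; rewrite ?RplusE ?RoppE ?RmultE.
    rewrite -leNgt -subr_ge0 in HGb.
    by rewrite addrC (mulrC _ s2) -mulrBr mulr_ge0.
  move=> HT; rewrite subr_le0; apply: le_trans HT; by rewrite lerBlDr lerDl.
move/forallPn: Hall => [v Hv]; rewrite -leNgt in Hv.
have : 1 <= S.
  rewrite /S (bigD1 v) //=.
  have h1 : 1 <= exp (s1 * a) * exp (- s1) ^+ degree G v.
    rewrite exp_mul_pow; apply: exp_ge1; rewrite ?RplusE ?RoppE ?RmultE.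
    rewrite -subr_ge0 in Hv.
    by rewrite mulrN mulrC -mulrBl mulr_ge0.
  have h2 : 0 <= \sum_(i | i != v) exp (s1 * a) * exp (- s1) ^+ degree G i.
    by apply: sumr_ge0 => w _; rewrite mulr_ge0 ?exprn_ge0 ?exp_ge0'.
  by apply: (le_trans h1); rewrite lerDl.
move=> HS; rewrite subr_le0; apply: le_trans T0; by rewrite subr_le0.
Qed.

Lemma prob_bound n (p a b s1 s2 : R) :
  (1 < n)%N -> 0 <= p -> p <= 1 -> 0 <= s1 -> 0 <= s2 -> a < n%:R -> b <= n.-1%:R * a ->
  1 - n%:R * (exp (s1 * a) * (p * exp (- s1) + (1 - p)) ^+ n.-1)
    - exp (-(s2 * b)) * (p * exp s2 + (1 - p)) ^+ #|all_pairs n|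
  <= Gnp_prob p (fun G : {set {set 'I_n}} => (tree_packing_number G < min_degree G)%N).
Proof.
move=> Hn Hp0 Hp1 Hs1 Hs2 Han Hb.
rewrite Gnp_probE.
have Hpt (G : {set {set 'I_n}}) :
  wt p G * (1 - \sum_(v : 'I_n) exp (s1 * a) * exp (- s1) ^+ degree G v
    - exp (-(s2 * b)) * exp s2 ^+ #|G|)
  <= (if (tree_packing_number G < min_degree G)%N then wt p G else 0).
  have := ind_bound G p Hn Hs1 Hs2 Han Hb.
  have w0 := wt_ge0 G Hp0 Hp1.
  case: ifP => _ H.
    by rewrite -[X in _ <= X]mulr1 ler_wpM2l.
  exact: mulr_ge0_le0.
apply: (le_trans _ (ler_sum _ (fun G _ => Hpt G))).
rewrite le_eqVlt; apply/orP; left; apply/eqP.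
under [RHS]eq_bigr do rewrite mulrBr mulrBr mulr1.
rewrite !sumrB sum_wt; congr (_ - _ - _).
  under eq_bigr do rewrite mulr_sumr.
  rewrite exchange_big /=.
  under eq_bigr do under eq_bigr do rewrite mulrCA.
  under eq_bigr do rewrite -mulr_sumr mgf_deg.
  by rewrite sumr_const card_ord mulr_natl.
under eq_bigr do rewrite mulrCA.
by rewrite -mulr_sumr mgf_edges.
Qed.

Lemma prob_le1 n (p : R) (P : {set {set 'I_n}} -> bool) :
  0 <= p -> p <= 1 -> Gnp_prob p P <= 1.
Proof.
move=> H0 H1; rewrite Gnp_probE -(sum_wt n p); apply: ler_sum => G _.
by case: ifP => _; rewrite ?wt_ge0.
Qed.

Lemma bin2_mul2 n : ('C(n, 2) * 2 = n * n.-1)%N.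
Proof.
elim: n => [|n IH] //; rewrite binS bin1 mulnDl IH.
by case: n {IH} => [|n] //; rewrite -mulnDr addn2 mulnC.
Qed.

Local Close Scope ring_scope.
Local Open Scope R_scope.

Lemma prob_bound_R n (p a b s1 s2 : R) :
  (1 < n)%N -> 0 <= p -> p <= 1 -> 0 <= s1 -> 0 <= s2 -> a < INR n -> b <= INR (n.-1) * a ->
  1 - INR n * (exp (s1 * a) * (p * exp (- s1) + (1 - p)) ^ n.-1)
    - exp (-(s2 * b)) * (p * exp s2 + (1 - p)) ^ 'C(n, 2)
  <= Gnp_prob p (fun G : {set {set 'I_n}} => (tree_packing_number G < min_degree G)%N).
Proof.
move=> Hn Hp0 Hp1 Hs1 Hs2 Han Hb.
rewrite !RpowE -card_all_pairs; apply/RleP.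
rewrite INRE in Han; rewrite INRE in Hb.
rewrite ?INRE ?RminusE ?RmultE ?RplusE ?RoppE ?R1E ?R0E.
apply: prob_bound => //; first [apply/RleP; assumption | apply/RltP; assumption].
Qed.

Lemma per_n n (q eps : R) (K : nat) : (120 <= n)%N -> (K <= n)%N -> 0 <= q <= 1 ->
  INR 51 * ln (INR n) / INR n <= q -> 0 < eps -> 2 / eps < INR K ->
  R_dist (Gnp_prob q (fun G : {set {set 'I_n}} => (tree_packing_number G < min_degree G)%N)) 1 < eps.
Proof.
move=> H120 HKn [Hq0 Hq1] Hql Heps HK.
have Hql' := INR51 Hql.
have Hx : 120 <= INR n.
  have := INR_geq H120. by rewrite [INR 120]INR_IZR_INZ.
have Hn0 : (0 < n)%N by apply: leq_trans H120.
have Hn1 : (1 < n)%N by apply: leq_trans H120.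
have Hk : INR n.-1 = INR n - 1 by apply: INR_pred'.
have HC : 2 * INR 'C(n, 2) = INR n * (INR n - 1).
  have E := bin2_mul2 n; rewrite -!multE in E.
  have E2 := f_equal INR E; rewrite !mult_INR Hk in E2.
  have -> : 2 = INR 2 by rewrite INR_IZR_INZ.
  lra.
have [Ha Hb] := @cond_arith (INR n) q (INR 'C(n, 2)) n.-1 ltac:(lra) Hk HC (conj Hq0 Hq1).
have Hlow := @prob_bound_R n q (11/20 * INR n.-1 * q) (21/20 * INR 'C(n, 2) * q) (2/5) (1/25)
   Hn1 Hq0 Hq1 ltac:(lra) ltac:(lra) Ha Hb.
have HT1 := @T1_bound (INR n) q n.-1 ltac:(lra) Hk (conj Hq0 Hq1) Hql'.
have HT2 := @T2_bound (INR n) q 'C(n, 2) ltac:(lra) HC (conj Hq0 Hq1) Hql'.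
have Hup : Gnp_prob q (fun G : {set {set 'I_n}} => (tree_packing_number G < min_degree G)%N) <= 1.
  apply/RleP; apply: prob_le1; apply/RleP; assumption.
apply: (final_step Hup Hlow HT1 HT2 Heps).
have := INR_geq HKn; lra.
Qed.

Local Close Scope R_scope.

Theorem theorem1p3 (p : nat -> R) :
  (forall n : nat, Rle R0 (p n) /\ Rle (p n) R1) ->
  (exists N : nat, forall n : nat, (N <= n)%N ->
      Rle (Rdiv (Rmult (INR 51) (ln (INR n))) (INR n)) (p n)) ->
  Un_cv (fun n => @Gnp_prob n (p n) (fun G => tree_packing_number G < min_degree G)) R1.
Proof.
move=> Hp [N HN] eps Heps.
have [K HK] := arch_eps Heps.
exists (maxn (maxn N 120) K) => n Hn.
have Hn' : (maxn (maxn N 120) K <= n)%N by apply/ssrnat.leP.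
rewrite !geq_max in Hn'; case/andP: Hn' => /andP[HNn H120] HKn.
exact: per_n H120 HKn (Hp n) (HN n HNn) Heps HK.
Qed.
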